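(* Let $m,n\ge1$, let $a_1,\dots,a_n$ be distinct nonnegative real numbers, let $m_1,\dots,m_n\ge1$ be integers, let $c_0,\dots,c_{m-1},b_k^{(j)}\in\mathbb{C}$, and let $$r(\lambda)=\lambda^m-c_{m-1}\lambda^{m-1}-\cdots-c_1\lambda-c_0-\sum_{j=1}^n\sum_{k=1}^{m_j}\frac{b_k^{(j)}}{(\lambda-a_j)^k}.$$ If $\lambda_0$ is a zero of $r$, then $$|\lambda_0|\le\frac{\alpha+\beta+\sqrt{(\alpha-\beta)^2+(\gamma+\delta)^2}}{2},$$ where $\alpha=\max_{1\le j\le n}\{a_j+\cos(\frac{\pi}{m_j+1})\}$, $\beta=w(\mathcal{B}_0)$, $\gamma=\sqrt{\sum_{j=1}^n m_j}$, $\delta=\sqrt{\sum_{j=1}^n\sum_{k=1}^{m_j}|b_k^{(j)}|^2}$, and $\mathcal{B}_0$ is the $m\times m$ matrix with $1$'s on the superdiagonal, last row $(c_0,c_1,\dots,c_{m-1})$, and zeros elsewhere.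
   Context: A zero of $r$ is a $\lambda_0\in\mathbb{C}\setminus\{a_1,\dots,a_n\}$ with $r(\lambda_0)=0$. For a square complex matrix $A$, $w(A)=\sup\{|x^*Ax|: x^*x=1\}$ is its numerical radius. *)

(* Defs.v *)
From HB Require Import structures.
From mathcomp Require Import all_boot all_order all_algebra.
From mathcomp Require Import all_classical all_reals all_analysis.
From mathcomp Require Import complex.
Set Implicit Arguments. Unset Strict Implicit. Unset Printing Implicit Defensive.
Import Order.TTheory GRing.Theory Num.Theory.
Local Open Scope ring_scope.
Local Open Scope classical_set_scope.

Definition cmod (R : realType) (z : R[i]) : R := Normc.normc z.

Definition adjmx (R : realType) (p q : nat) (A : 'M[R[i]]_(p, q)) : 'M[R[i]]_(q, p) :=
  (map_mx (@Num.conj _) A)^T.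

Definition numerical_radius (R : realType) (m : nat) (A : 'M[R[i]]_m) : R :=
  sup [set cmod ((adjmx x *m A *m x) 0 0) |
        x in [set x : 'cV[R[i]]_m | (adjmx x *m x) 0 0 = 1]].

Definition B0 (R : realType) (m : nat) (c : 'I_m -> R[i]) : 'M[R[i]]_m :=
  \matrix_(i, j) (if (i : nat) == m.-1 then c j
                  else if (j : nat) == i.+1 then 1 else 0).

(* r(lambda); b j k stands for b_{k+1}^{(j)}, k : 'I_(mj j) *)
Definition rfun (R : realType) (m n : nat) (a : 'I_n -> R) (mj : 'I_n -> nat)
    (c : 'I_m -> R[i]) (b : forall j : 'I_n, 'I_(mj j) -> R[i]) (lam : R[i]) : R[i] :=
  lam ^+ m - \sum_(i < m) c i * lam ^+ i
  - \sum_(j < n) \sum_(k < mj j) b j k / (lam - ((a j)%:C)%C) ^+ k.+1.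
Arguments rfun {R m n} a mj c b lam.

(* Main.v *)
Require Import Defs.
From HB Require Import structures.
From mathcomp Require Import all_boot all_order all_algebra.
From mathcomp Require Import all_classical all_reals all_analysis.
From mathcomp Require Import complex.
From mathcomp Require Import ring lra.
Import Order.TTheory GRing.Theory Num.Theory.
Local Open Scope ring_scope.
Section JJ.
Variable R : realType.

Lemma jordan_bound (K : nat) (u : nat -> R) : (forall k, 0 <= u k) ->
  \sum_(k < K) u k.+1 * u k <= cos (pi / K.+2%:R) * \sum_(k < K.+1) u k ^+ 2.
Proof.
move=> u0.
set th := pi / K.+2%:R.
pose S (i : nat) := sin (i%:R * th).
have thpos : 0 < th by rewrite divr_gt0 ?pi_gt0 ?ltr0n.
have Spos : forall i, (0 < i <= K.+1)%N -> 0 < S i.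
  move=> i /andP[i0 iK]; apply: sin_gt0_pi; apply/andP; split.
    by rewrite mulr_gt0 ?ltr0n.
  rewrite /th mulrCA -[X in _ < X]mulr1 ltr_pM2l ?pi_gt0 // ltr_pdivrMr ?ltr0n // mul1r ltr_nat.
  by rewrite ltnS.
have SK2 : S K.+2 = 0.
  by rewrite /S /th mulrCA divff ?mulr1 ?sinpi // pnatr_eq0.
have S0 : S 0%N = 0 by rewrite /S mul0r sin0.
have rec : forall i, S i.+2 + S i = 2 * cos th * S i.+1.
  move=> i; rewrite /S.
  have -> : i.+2%:R * th = i.+1%:R * th + th by rewrite -[in LHS](addn1 i.+1) natrD mulrDl mul1r.
  have -> : i%:R * th = i.+1%:R * th - th by rewrite -(addn1 i) natrD mulrDl mul1r addrK.
  rewrite sinD sinB; ring.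
pose g (k : nat) := S k.+2 / S k.+1.
pose h (k : nat) := S k / S k.+1.
have step : forall k, (k < K)%N ->
    2 * (u k.+1 * u k) <= g k * u k ^+ 2 + h k.+1 * u k.+1 ^+ 2.
  move=> k kK.
  have A : 0 < S k.+1 by apply: Spos; rewrite /= ltnS ltnW.
  have B : 0 < S k.+2 by apply: Spos; rewrite /= !ltnS.
  rewrite /g /h.
  have : 0 <= (S k.+2 * u k - S k.+1 * u k.+1) ^+ 2 / (S k.+1 * S k.+2).
    by rewrite divr_ge0 ?sqr_ge0 // mulr_ge0 // ltW.
  move=> H; rewrite -subr_ge0; apply: le_trans H _; rewrite le_eqVlt; apply/orP; left.
  apply/eqP; field.
  by apply/andP; split; rewrite gt_eqF.
have gh : forall k, (k < K.+1)%N -> g k + h k = 2 * cos th.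
  move=> k kK; rewrite /g /h -mulrDl addrC [S k + _]addrC rec mulfK //.
  by rewrite gt_eqF // Spos.
suff: \sum_(k < K) (g k * u k ^+ 2 + h k.+1 * u k.+1 ^+ 2) = 2 * cos th * \sum_(k < K.+1) u k ^+ 2.
  move=> E.
  have H : 2 * (\sum_(k < K) u k.+1 * u k) <= 2 * cos th * \sum_(k < K.+1) u k ^+ 2.
    rewrite -E mulr_sumr; apply: ler_sum => k _; exact: step.
  by rewrite -mulrA ler_pM2l in H.
rewrite big_split /=.
have -> : \sum_(k < K) g k * u k ^+ 2 = \sum_(k < K.+1) g k * u k ^+ 2.
  by rewrite big_ord_recr /= /g SK2 mul0r mul0r addr0.
have -> : \sum_(k < K) h k.+1 * u k.+1 ^+ 2 = \sum_(k < K.+1) h k * u k ^+ 2.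
  by rewrite big_ord_recl /= /h S0 mul0r mul0r add0r.
rewrite -big_split /= mulr_sumr; apply: eq_bigr => k _.
by rewrite -mulrDl gh.
Qed.
End JJ.

Section CSS.
Variable R : realType.

Lemma cs2 (I : finType) (u v : I -> R) :
  (\sum_i u i * v i) ^+ 2 <= (\sum_i u i ^+ 2) * (\sum_i v i ^+ 2).
Proof.
set U := \sum_i u i ^+ 2; set V := \sum_i v i ^+ 2; set W := \sum_i u i * v i.
have U0 : 0 <= U by apply: sumr_ge0 => i _; apply: sqr_ge0.
have [Ue|Upos] := eqVneq U 0.
  have uz : forall i, u i = 0.
    move=> i; have H := psumr_eq0P (fun j _ => sqr_ge0 (u j)) Ue.
    by apply/eqP; rewrite -sqrf_eq0; apply/eqP; apply: H.
  have -> : W = 0 by rewrite /W big1 // => i _; rewrite uz mul0r.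
  by rewrite expr0n /= mulr_ge0 // sumr_ge0 // => i _; apply: sqr_ge0.
have Up : 0 < U by rewrite lt_def Upos U0.
have E : \sum_i (U * v i - W * u i) ^+ 2 = U * (U * V - W ^+ 2).
  transitivity (\sum_i (U ^+ 2 * v i ^+ 2 + (- (2 * U * W)) * (u i * v i) + W ^+ 2 * u i ^+ 2)).
    by apply: eq_bigr => i _; ring.
  rewrite !big_split /= -!mulr_sumr -/U -/V -/W; ring.
have : 0 <= U * (U * V - W ^+ 2) by rewrite -E sumr_ge0 // => i _; apply: sqr_ge0.
by rewrite pmulr_rge0 // subr_ge0.
Qed.

Lemma cs (I : finType) (u v : I -> R) :
  \sum_i u i * v i <= Num.sqrt (\sum_i u i ^+ 2) * Num.sqrt (\sum_i v i ^+ 2).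
Proof.
have [W0|Wp] := lerP (\sum_i u i * v i) 0.
  by apply: le_trans W0 _; rewrite mulr_ge0 ?sqrtr_ge0.
rewrite -sqrtrM ?sumr_ge0 // => [|i _]; last by apply: sqr_ge0.
have H := ler_wsqrtr (cs2 _ u v).
rewrite sqrtr_sqr in H; exact: le_trans (ler_norm _) H.
Qed.
End CSS.

Section FF.
Variable R : realType.

Lemma quad_ge0 (A B s p q : R) : 0 <= A -> 0 <= B -> 4 * (A * B) = s ^+ 2 -> 0 <= s ->
  0 <= p -> 0 <= q -> s * p * q <= A * p ^+ 2 + B * q ^+ 2.
Proof.
move=> A0 B0 AB s0 p0 q0.
have [Ae|Ap] := eqVneq A 0.
  have : s ^+ 2 = 0 by rewrite -AB Ae mul0r mulr0.
  move/eqP; rewrite sqrf_eq0 => /eqP ->; by rewrite Ae !mul0r add0r mulr_ge0 // sqr_ge0.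
have Apos : 0 < A by rewrite lt_def Ap A0.
have H := sqr_ge0 (A * p - s * q / 2).
suff : 0 <= A * (A * p ^+ 2 + B * q ^+ 2 - s * p * q) by rewrite pmulr_rge0 // subr_ge0.
have -> : A * (A * p ^+ 2 + B * q ^+ 2 - s * p * q) = (A * p - s * q / 2) ^+ 2 + (A * B - s ^+ 2 / 4) * q ^+ 2.
  by field.
have -> : A * B - s ^+ 2 / 4 = 0 by rewrite -AB; field.
by rewrite mul0r addr0.
Qed.

Lemma final_bound (l al be s p q : R) : 0 < p -> 0 <= q -> 0 <= s ->
  l * (p ^+ 2 + q ^+ 2) <= be * p ^+ 2 + al * q ^+ 2 + s * p * q ->
  l <= (al + be + Num.sqrt ((al - be) ^+ 2 + s ^+ 2)) / 2.
Proof.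
move=> p0 q0 s0 H.
set D := Num.sqrt _.
have D0 : 0 <= D by apply: sqrtr_ge0.
have D2 : D ^+ 2 = (al - be) ^+ 2 + s ^+ 2 by rewrite sqr_sqrtr // addr_ge0 // sqr_ge0.
set L := (al + be + D) / 2.
have A0 : 0 <= L - be by rewrite /L; nra.
have B0 : 0 <= L - al by rewrite /L; nra.
have AB : 4 * ((L - be) * (L - al)) = s ^+ 2 by rewrite /L; nra.
have Q := @quad_ge0 _ _ _ p q A0 B0 AB s0 (ltW p0) q0.
have pq : 0 < p ^+ 2 + q ^+ 2 by rewrite ltr_wpDr ?sqr_ge0 // exprn_gt0.
rewrite -(ler_pM2r pq); nra.
Qed.
End FF.
Section CC.
Variable R : realType.
Implicit Types x y z : R[i].

Lemma normE z : `|z| = ((cmod z)%:C)%C. Proof. by []. Qed.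
Lemma cmod_ge0 z : 0 <= cmod z.
Proof. by rewrite -(lecR 0 (cmod z)) -normE normr_ge0. Qed.
Lemma cmodM x y : cmod (x * y) = cmod x * cmod y.
Proof. exact: Normc.normcM. Qed.
Lemma cmodJ z : cmod (z^*) = cmod z.
Proof. by apply: complexI; rewrite -!normE norm_conjC. Qed.
Lemma cmod_le x (r : R) : `|x| <= (r%:C)%C -> cmod x <= r.
Proof. by rewrite normE lecR. Qed.
Lemma cmod_sum (I : finType) (F : I -> R[i]) : cmod (\sum_i F i) <= \sum_i cmod (F i).
Proof.
apply: cmod_le; rewrite rmorph_sum /=; apply: le_trans (ler_norm_sum _ _ _) _.
by apply: ler_sum => i _; rewrite normE.
Qed.
Lemma cmodD x y : cmod (x + y) <= cmod x + cmod y.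
Proof. by apply: cmod_le; rewrite rmorphD /= -!normE ler_normD. Qed.
Lemma cmodR (r : R) : cmod (r%:C)%C = `|r|.
Proof. by apply: complexI; rewrite -normE normc_def /= expr0n addr0 sqrtr_sqr. Qed.
Lemma sqr_cmod z : (((cmod z) ^+ 2)%:C)%C = z * z^*.
Proof. by rewrite rmorphXn /= -normE normCK. Qed.
Lemma cmodX z k : cmod (z ^+ k) = cmod z ^+ k.
Proof. by apply: complexI; rewrite rmorphXn -!normE normrX. Qed.

Definition Zf (lam : R[i]) (ar : R) (k : nat) := ((lam - (ar%:C)%C)^-1) ^+ k.

Lemma stepB (lam : R[i]) (ar : R) (K : nat) : 0 <= ar -> lam != (ar%:C)%C ->
  let Z := Zf lam ar in
  cmod lam * \sum_(k < K.+1) cmod (Z k.+1) ^+ 2 <=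
  (ar + cos (pi / K.+2%:R)) * \sum_(k < K.+1) cmod (Z k.+1) ^+ 2 + cmod (Z 1%N).
Proof.
move=> a0 ne; rewrite /=; set Z := Zf lam ar.
have d0 : lam - (ar%:C)%C != 0 by rewrite subr_eq0.
have rec : forall k, lam * Z k.+1 = (ar%:C)%C * Z k.+1 + Z k.
  move=> k; have E : lam = (lam - (ar%:C)%C) + (ar%:C)%C by rewrite subrK.
  rewrite {1}E.
  by rewrite mulrDl /Z /Zf exprS mulrA mulfV // mul1r addrC.
set Qs := \sum_(k < K.+1) cmod (Z k.+1) ^+ 2.
have Qs0 : 0 <= Qs by apply: sumr_ge0 => k _; apply: sqr_ge0.
have QC : (Qs%:C)%C = \sum_(k < K.+1) Z k.+1 * (Z k.+1)^*.
  by rewrite rmorph_sum; apply: eq_bigr => k _; exact: sqr_cmod.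
have idt : lam * (Qs%:C)%C = (ar%:C)%C * (Qs%:C)%C + \sum_(k < K.+1) Z k * (Z k.+1)^*.
  rewrite QC !mulr_sumr -big_split; apply: eq_bigr => k _ /=.
  by rewrite mulrA rec; ring.
have -> : cmod lam * Qs = cmod (lam * (Qs%:C)%C) by rewrite cmodM cmodR ger0_norm.
rewrite idt; apply: le_trans (cmodD _ _) _.
rewrite cmodM !cmodR !ger0_norm // mulrDl -addrA lerD2l.
apply: le_trans (cmod_sum _ _) _.
have -> : \sum_(k < K.+1) cmod (Z k * (Z k.+1)^*) = \sum_(k < K.+1) cmod (Z k.+1) * cmod (Z k).
  by apply: eq_bigr => k _; rewrite cmodM cmodJ mulrC.
rewrite big_ord_recl /= expr1n expr0n addr0 sqrtr1 mulr1.
have bb : forall i : nat, bump 0 i = i.+1 by move=> i; rewrite /bump add1n.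
under eq_bigr => i _ do rewrite bb.
rewrite addrC; apply: lerD; first by rewrite /Z /Zf expr1.
exact: (@jordan_bound R K (fun k => cmod (Z k.+1)) (fun k => cmod_ge0 _)).
Qed.

Lemma quadE (m : nat) (A : 'M[R[i]]_m) (v : 'cV[R[i]]_m) :
  (adjmx v *m A *m v) 0 0 = \sum_j (\sum_i (v i 0)^* * A i j) * v j 0.
Proof.
rewrite !mxE; apply: eq_bigr => j _; rewrite !mxE; congr (_ * _).
by apply: eq_bigr => i _; rewrite /adjmx !mxE.
Qed.

Lemma normsqE (m : nat) (v : 'cV[R[i]]_m) :
  (adjmx v *m v) 0 0 = ((\sum_i cmod (v i 0) ^+ 2)%:C)%C.
Proof.
rewrite !mxE rmorph_sum; apply: eq_bigr => i _.
by rewrite /adjmx !mxE mulrC -sqr_cmod.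
Qed.

Lemma conj_real (r : R) : ((r%:C)%C)^* = (r%:C)%C.
Proof. by apply: conj_Creal; rewrite complex_real. Qed.

Lemma adjmxZ (m : nat) (s : R[i]) (v : 'cV[R[i]]_m) : adjmx (s *: v) = s^* *: adjmx v.
Proof. by apply/matrixP => i j; rewrite /adjmx !mxE rmorphM. Qed.

Lemma nr_ub (m : nat) (A : 'M[R[i]]_m) :
  has_ubound [set cmod ((adjmx x *m A *m x) 0 0) |
        x in [set x : 'cV[R[i]]_m | (adjmx x *m x) 0 0 = 1]].
Proof.
exists (\sum_j \sum_i cmod (A i j)) => _ [w /= w1 <-].
have W1 : \sum_i cmod (w i 0) ^+ 2 = 1.
  by apply: complexI; rewrite -normsqE w1.
have wle : forall i, cmod (w i 0) <= 1.
  move=> i; have : cmod (w i 0) ^+ 2 <= 1.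
    rewrite -W1 (bigD1 i) //= lerDl; apply: sumr_ge0 => k _; apply: sqr_ge0.
  by move=> h; have c0 := cmod_ge0 (w i 0); nra.
rewrite quadE; apply: le_trans (cmod_sum _ _) _; apply: ler_sum => j _.
rewrite cmodM; apply: le_trans (ler_wpM2l _ (wle j)) _.
  by apply: cmod_ge0.
rewrite mulr1; apply: le_trans (cmod_sum _ _) _; apply: ler_sum => i _.
by rewrite cmodM cmodJ -[X in _ <= X]mul1r ler_wpM2r // ?cmod_ge0.
Qed.

Lemma nr_bound (m : nat) (A : 'M[R[i]]_m) (v : 'cV[R[i]]_m) :
  0 < \sum_i cmod (v i 0) ^+ 2 ->
  cmod ((adjmx v *m A *m v) 0 0) <= numerical_radius A * \sum_i cmod (v i 0) ^+ 2.
Proof.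
set P := \sum_i _ => P0.
set s := (((Num.sqrt P)^-1)%:C)%C.
have sq0 : 0 < Num.sqrt P by rewrite sqrtr_gt0.
have ss : s * s = ((P^-1)%:C)%C.
  by rewrite -rmorphM /= -invfM -expr2 sqr_sqrtr // ltW.
have H : cmod ((adjmx (s *: v) *m A *m (s *: v)) 0 0) <= numerical_radius A.
  apply: ub_le_sup; first exact: nr_ub.
  exists (s *: v) => //=.
  rewrite adjmxZ conj_real -scalemxAr -scalemxAl scalerA -/s ss mxE normsqE -rmorphM /=.
  by rewrite mulVf // gt_eqF.
rewrite adjmxZ conj_real -scalemxAr -scalemxAl -scalemxAl scalerA -/s ss mxE in H.
have Pi : 0 <= P^-1 by rewrite invr_ge0 ltW.
rewrite cmodM cmodR (ger0_norm Pi) in H.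
by rewrite mulrC -ler_pdivrMl.
Qed.

Lemma quadE' (m : nat) (A : 'M[R[i]]_m) (v : 'cV[R[i]]_m) :
  (adjmx v *m A *m v) 0 0 = \sum_i (v i 0)^* * \sum_j A i j * v j 0.
Proof.
rewrite quadE; under eq_bigr do rewrite mulr_suml.
rewrite exchange_big; apply: eq_bigr => i _; rewrite mulr_sumr.
by apply: eq_bigr => j _; rewrite mulrA.
Qed.

Lemma sum_last (m' : nat) (f : 'I_m'.+1 -> R[i]) :
  \sum_(i < m'.+1) (if (i : nat) == m' then f i else 0) = f ord_max.
Proof.
rewrite big_ord_recr /= eqxx big1 ?add0r // => i _.
by rewrite /= ltn_eqF.
Qed.

Lemma B0row (m' : nat) (c : 'I_m'.+1 -> R[i]) (lam : R[i]) (i : 'I_m'.+1) :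
  \sum_j B0 c i j * lam ^+ j =
  if (i : nat) == m' then \sum_j c j * lam ^+ j else lam ^+ i.+1.
Proof.
case: eqP => him.
  by apply: eq_bigr => j _; rewrite mxE /= him eqxx.
have ilt : (i.+1 < m'.+1)%N.
  by rewrite ltnS ltn_neqAle -ltnS ltn_ord andbT; apply/eqP.
rewrite (bigD1 (Ordinal ilt)) //= big1 ?addr0.
  by rewrite mxE /= (introF eqP him) eqxx mul1r.
move=> j /eqP jne; rewrite mxE /= (introF eqP him).
case: eqP => [je|]; last by rewrite mul0r.
by exfalso; apply: jne; apply: val_inj.
Qed.
End CC.

Theorem theorem3p5 (R : realType) (m n : nat) (a : 'I_n -> R) (mj : 'I_n -> nat)
    (c : 'I_m -> R[i]) (b : forall j : 'I_n, 'I_(mj j) -> R[i]) (lam0 : R[i]) :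
  (1 <= m)%N -> (1 <= n)%N ->
  injective a -> (forall j, 0 <= a j) -> (forall j, (1 <= mj j)%N) ->
  (forall j, lam0 != ((a j)%:C)%C) -> rfun a mj c b lam0 = 0 ->
  let alpha := \big[Num.max/0]_(j < n) (a j + cos (pi / (mj j).+1%:R)) in
  let beta := numerical_radius (B0 c) in
  let gamma := Num.sqrt (\sum_(j < n) (mj j)%:R) in
  let delta := Num.sqrt (\sum_(j < n) \sum_(k < mj j) cmod (b j k) ^+ 2) in
  cmod lam0 <= (alpha + beta + Num.sqrt ((alpha - beta) ^+ 2 + (gamma + delta) ^+ 2)) / 2.
Proof.
case: m c => [|m'] c; first by [].
move=> _ _ _ a0 mj1 lamna r0 /=.
set alpha := \big[Num.max/0]_(j < n) _.
set beta := numerical_radius _.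
set gamma := Num.sqrt (\sum_(j < n) (mj j)%:R).
set delta := Num.sqrt (\sum_(j < n) \sum_(k < mj j) _).
set lam := lam0.
pose x (i : nat) := lam ^+ i.
pose Z j := @Zf R lam (a j).
pose P := \sum_(i < m'.+1) cmod (x i) ^+ 2.
pose Qj j := \sum_(k < mj j) cmod (Z j k.+1) ^+ 2.
pose Q := \sum_j Qj j.
pose S := \sum_j \sum_(k < mj j) b j k * Z j k.+1.
pose xv : 'cV[R[i]]_m'.+1 := \col_i x i.
have P0 : 0 <= P by apply: sumr_ge0 => i _; apply: sqr_ge0.
have Qj0 : forall j, 0 <= Qj j by move=> j; apply: sumr_ge0 => i _; apply: sqr_ge0.
have Q0 : 0 <= Q by apply: sumr_ge0 => j _.
have P1 : 1 <= P.
  rewrite /P big_ord_recl /= expr1n expr0n addr0 sqrtr1 expr1n lerDl.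
  by apply: sumr_ge0 => i _; apply: sqr_ge0.
have rl : lam ^+ m'.+1 = \sum_i c i * lam ^+ i + S.
  move: r0; rewrite /rfun => /eqP; rewrite subr_eq0 subr_eq => /eqP ->.
  rewrite addrC; congr (_ + _); apply: eq_bigr => j _; apply: eq_bigr => k _.
  by rewrite /Z /Zf exprVn.
have idA : lam * (P%:C)%C = (adjmx xv *m B0 c *m xv) 0 0 + (x m')^* * S.
  rewrite quadE' rmorph_sum mulr_sumr.
  transitivity (\sum_(i < m'.+1) ((x i)^* * \sum_j B0 c i j * lam ^+ j
                     + (if (i : nat) == m' then (x i)^* * S else 0))).
    apply: eq_bigr => i _; rewrite B0row.
    have -> : lam * ((cmod (x i) ^+ 2)%:C)%C = (x i)^* * (lam * x i).
      by rewrite sqr_cmod; ring.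
    rewrite /x -exprS; case: eqP => [->|_]; last by rewrite addr0.
    by rewrite rl mulrDr.
  rewrite big_split /= sum_last /=; congr (_ + _); apply: eq_bigr => i _.
  rewrite !mxE; congr (_ * _); apply: eq_bigr => j _; by rewrite [xv j 0]mxE.
have xvP : \sum_i cmod (xv i 0) ^+ 2 = P.
  by apply: eq_bigr => i _; rewrite mxE.
have stepA : cmod lam * P <= beta * P + cmod (x m') * cmod S.
  have -> : cmod lam * P = cmod (lam * (P%:C)%C) by rewrite cmodM cmodR ger0_norm.
  rewrite idA; apply: le_trans (cmodD _ _ _) _; apply: lerD.
    by rewrite -xvP; apply: nr_bound; rewrite xvP; apply: lt_le_trans P1.
  by rewrite cmodM cmodJ.
have stepBj : forall j, cmod lam * Qj j <= (a j + cos (pi / (mj j).+1%:R)) * Qj j + cmod (Z j 1%N).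
  move=> j; have := @stepB R lam (a j) (mj j).-1 (a0 j) (lamna j).
  by rewrite /= (prednK (mj1 j)).
have stepC : cmod S <= delta * Num.sqrt Q.
  apply: le_trans (cmod_sum _ _ _) _.
  apply: (@le_trans _ _ (\sum_j Num.sqrt (\sum_(k < mj j) cmod (b j k) ^+ 2) * Num.sqrt (Qj j))).
    apply: ler_sum => j _; apply: le_trans (cmod_sum _ _ _) _.
    under eq_bigr do rewrite cmodM.
    exact: cs.
  apply: le_trans (cs _ _ _ _) _.
  rewrite /delta /Q; apply: ler_pM; rewrite ?sqrtr_ge0 //; apply: ler_wsqrtr; apply: ler_sum => j _.
    by rewrite sqr_sqrtr // sumr_ge0 // => k _; apply: sqr_ge0.
  by rewrite sqr_sqrtr.
have stepD : \sum_j cmod (Z j 1%N) <= gamma * Num.sqrt Q.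
  have -> : \sum_j cmod (Z j 1%N) = \sum_(j < n) 1 * cmod (Z j 1%N).
    by apply: eq_bigr => j _; rewrite mul1r.
  apply: le_trans (cs _ _ _ _) _.
  rewrite /gamma /Q; apply: ler_pM; rewrite ?sqrtr_ge0 //; apply: ler_wsqrtr; apply: ler_sum => j _.
    by rewrite expr1n ler1n.
  rewrite /Qj (bigD1 (Ordinal (mj1 j))) //= lerDl.
  by apply: sumr_ge0 => k _; apply: sqr_ge0.
have stepE : \sum_j (a j + cos (pi / (mj j).+1%:R)) * Qj j <= alpha * Q.
  rewrite /Q mulr_sumr; apply: ler_sum => j _; apply: ler_wpM2r => //.
  rewrite /alpha; exact: le_bigmax.
have stepQ : cmod lam * Q <= alpha * Q + gamma * Num.sqrt Q.
  rewrite /Q mulr_sumr; apply: le_trans (ler_sum _ (fun j _ => stepBj j)) _.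
  by rewrite big_split /=; apply: lerD.
set p := Num.sqrt P; set q := Num.sqrt Q.
have pP : P = p ^+ 2 by rewrite sqr_sqrtr.
have qQ : Q = q ^+ 2 by rewrite sqr_sqrtr.
have p1 : 1 <= p by rewrite -sqrtr1 ler_wsqrtr.
have q0 : 0 <= q by apply: sqrtr_ge0.
have g0 : 0 <= gamma by apply: sqrtr_ge0.
have d0 : 0 <= delta by apply: sqrtr_ge0.
have xp : cmod (x m') <= p.
  have : cmod (x m') ^+ 2 <= P.
    rewrite /P (bigD1 ord_max) //= lerDl.
    by apply: sumr_ge0 => i _; apply: sqr_ge0.
  rewrite pP => h; have c0 := cmod_ge0 _ (x m'); nra.
have S0 := cmod_ge0 _ S.
apply: (@final_bound R (cmod lam) alpha beta (gamma + delta) p q).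
- by apply: lt_le_trans p1.
- exact: q0.
- by apply: addr_ge0.
- rewrite -pP -qQ mulrDr.
  have h1 : cmod (x m') * cmod S <= p * (delta * q).
    by apply: ler_pM => //; apply: cmod_ge0.
  have h2 : gamma * q <= gamma * q * p.
    by rewrite -{1}(mulr1 (gamma * q)) ler_wpM2l // mulr_ge0.
  have h3 : cmod (x m') * cmod S + gamma * q <= (gamma + delta) * p * q.
    apply: le_trans (lerD h1 h2) _; rewrite le_eqVlt; apply/orP; left; apply/eqP; ring.
  have := lerD stepA stepQ; move: h3.
  move: (cmod lam * P) (cmod lam * Q) (cmod (x m') * cmod S) (gamma * q) ((gamma + delta) * p * q) => u1 u2 u3 u4 u5.
  lra.
Qed.
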